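(* Fix $1<p,q<\infty$ with $\frac1p+\frac1q=1$, an integer $r>1$, and put $t=r^{1/q}$, $s=r^{1/p}$. Then for every $x\in\mathcal N_s$ we have $|x|_{p,r}\le 1+\frac{\|x\|_p^p}{t}$.
   Context: For $\alpha>0$ let $C_\alpha=\{\pm\alpha^j: j\in\mathbb Z\}\cup\{0\}$ and $\mathcal N_\alpha=\{x\in c_{00}: x(i)\in C_\alpha \text{ for all } i\}$ ($c_{00}$ = finitely supported real sequences). Let $K^{\mathcal M}_{q,r}$ be the smallest subset of $c_{00}$ containing all $\pm e_n$ and such that whenever $y_1,\dots,y_l\in K^{\mathcal M}_{q,r}$, $l\le r$, have pairwise disjoint supports, then $r^{-1/q}(y_1+\dots+y_l)\in K^{\mathcal M}_{q,r}$. Define $|x|_{p,r}=\sup\{\sum_i x(i)y(i): y\in K^{\mathcal M}_{q,r}\}$. *)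

(* Defs.v *)
From HB Require Import structures.
From mathcomp Require Import all_boot all_order all_algebra.
From mathcomp Require Import all_classical all_reals all_analysis.
Set Implicit Arguments. Unset Strict Implicit. Unset Printing Implicit Defensive.
Import Order.TTheory GRing.Theory Num.Theory.
Local Open Scope classical_set_scope.
Local Open Scope ring_scope.

Definition c00 (R : realType) (x : nat -> R) : Prop :=
  exists n : nat, forall i : nat, (n <= i)%N -> x i = 0.

Definition C_alpha (R : realType) (alpha : R) : set R :=
  [set a | a = 0 \/ exists j : int, a = alpha ^ j \/ a = - alpha ^ j].

Definition N_alpha (R : realType) (alpha : R) : set (nat -> R) :=
  [set x | c00 x /\ forall i, C_alpha alpha (x i)].

Definition sgn_unit (R : realType) (b : bool) (n : nat) : nat -> R :=
  fun i => if i == n then (-1) ^+ b else 0.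

Inductive KM (R : realType) (q : R) (r : nat) : (nat -> R) -> Prop :=
| KM_unit (b : bool) (n : nat) : KM q r (sgn_unit R b n)
| KM_comb (l : nat) (ys : 'I_l -> nat -> R) :
    (0 < l <= r)%N ->
    (forall j, KM q r (ys j)) ->
    (forall j k, j != k -> forall i, ys j i = 0 \/ ys k i = 0) ->
    KM q r (fun i => (r%:R `^ (- q^-1)) * \sum_(j < l) ys j i).

Definition norm_pr (R : realType) (q : R) (r : nat) (x : nat -> R) : R :=
  sup [set (\sum_(i \in [set: nat]) x i * y i)%R | y in KM q r].

Definition lp_pow (R : realType) (p : R) (x : nat -> R) : R :=
  (\sum_(i \in [set: nat]) `|x i| `^ p)%R.

(* Main.v *)
Require Import Defs.
From HB Require Import structures.
From mathcomp Require Import all_boot all_order all_algebra.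
From mathcomp Require Import all_classical all_reals all_analysis.
Import Order.TTheory GRing.Theory Num.Theory.
Local Open Scope classical_set_scope.
Local Open Scope ring_scope.
Set Implicit Arguments. Unset Strict Implicit.

Lemma single_nz (R : realType) (I : finType) (F : I -> R) :
  (forall j k, j != k -> F j = 0 \/ F k = 0) ->
  (forall j, F j = 0) \/ exists j0, forall j, j != j0 -> F j = 0.
Proof.
move=> H; have [j0 Hj0|Hn] := pickP (fun j => F j != 0).
  right; exists j0 => j /H [//|E]; by rewrite E eqxx in Hj0.
by left => j; move/negbFE/eqP: (Hn j).
Qed.

Lemma sum_single_le (R : realType) (I : finType) (F : I -> R) c :
  (forall j k, j != k -> F j = 0 \/ F k = 0) ->
  (forall j, F j <= c) -> 0 <= c -> \sum_j F j <= c.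
Proof.
move=> H Hc c0; case: (single_nz H) => [H0|[j0 H0]].
  by rewrite big1.
by rewrite (bigD1 j0) //= big1 ?addr0 // => j /H0.
Qed.

Lemma powz_dich (R : realType) (c : R) (m : int) : 1 < c -> c ^ m <= 1 \/ c <= c ^ m.
Proof.
move=> c1; case: m => [[|n]|n].
- by left; rewrite expr0z.
- right; change (c <= c ^+ n.+1); rewrite exprS -[X in X <= _]mulr1 ler_wpM2l ?exprn_ege1 ?ltW //.
  exact: lt_trans c1.
- left; rewrite NegzE -exprz_inv; change ((c^-1) ^+ n.+1 <= 1); rewrite exprVn.
  rewrite invf_le1 ?exprn_ege1 ?exprn_gt0 ?ltW //; exact: lt_trans c1.
Qed.

Lemma key_ineq (R : realType) (p q c A B : R) :
  0 < p -> 0 < q -> p^-1 + q^-1 = 1 -> 0 < c -> 0 < A -> 0 < B ->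
  (A <= B \/ c * B <= A) ->
  A `^ p^-1 * B `^ q^-1 <= A / c `^ q^-1 + B.
Proof.
move=> p0 q0 pq c0 A0 B0 [AB|cBA].
- apply: (@le_trans _ _ (B `^ p^-1 * B `^ q^-1)).
    rewrite ler_wpM2r ?powR_ge0 //; apply: ge0_ler_powR; rewrite ?nnegrE ?invr_ge0 ?(ltW p0) ?(ltW A0) ?(ltW B0) //.
  rewrite -powRD; last by rewrite (gt_eqF B0) implybT.
  rewrite pq powRr1 ?(ltW B0) // lerDr divr_ge0 ?powR_ge0 ?(ltW A0) //.
- have BA : B <= A / c by rewrite ler_pdivlMr // mulrC.
  apply: (@le_trans _ _ (A `^ p^-1 * (A / c) `^ q^-1)).
    rewrite ler_wpM2l ?powR_ge0 //; apply: ge0_ler_powR; rewrite ?nnegrE ?invr_ge0 ?divr_ge0 ?(ltW q0) ?(ltW A0) ?(ltW B0) ?(ltW c0) //.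
  rewrite powRM ?invr_ge0 ?(ltW A0) ?(ltW c0) // mulrA -powRD; last by rewrite (gt_eqF A0) implybT.
  rewrite pq powRr1 ?(ltW A0) // -powR_inv1 ?(ltW c0) // -powRrM mulN1r powRN.
  by rewrite lerDl ltW.
Qed.
Lemma normpow0 (R : realType) (q : R) : q != 0 -> `|0 : R| `^ q = 0.
Proof. by move=> q0; rewrite normr0 powR0. Qed.

Lemma KM_inv (R : realType) (q : R) (r : nat) (y : nat -> R) :
  0 < q -> (0 < r)%N -> KM q r y ->
  (forall i, y i = 0 \/ exists k : nat, `|y i| `^ q = (r%:R^-1) ^+ k) /\
  (forall n, \sum_(i < n) `|y i| `^ q <= 1).
Proof.
move=> q0 r0; have qn0 : q != 0 by rewrite gt_eqF.
have rR0 : 0 < r%:R :> R by rewrite ltr0n.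
have upow : (r%:R `^ (- q^-1) : R) `^ q = r%:R^-1.
  by rewrite -powRrM mulNr mulVf // powR_inv1 // ltW.
have u0 : 0 <= (r%:R `^ (- q^-1) : R) by apply: powR_ge0.
elim=> [b n|l ys lr _ IH disj].
- split.
    move=> i; rewrite /sgn_unit; case: (i == n); last by left.
    by right; exists 0%N; rewrite normr_sign powR1 expr0.
  move=> m; apply: sum_single_le => //.
    move=> j k jk; rewrite /sgn_unit.
    case: (eqVneq (nat_of_ord j) n) => [jn|jn]; last by left; rewrite normpow0.
    right; case: (eqVneq (nat_of_ord k) n) => [kn|kn]; last by rewrite normpow0.
    by move: jk; rewrite -(inj_eq val_inj) /= jn kn eqxx.
  move=> j; rewrite /sgn_unit; case: (_ == _); first by rewrite normr_sign powR1.
  by rewrite normpow0.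
- have key : forall i, `|r%:R `^ (- q^-1) * \sum_(j < l) ys j i| `^ q =
      r%:R^-1 * \sum_(j < l) `|ys j i| `^ q /\
      (r%:R `^ (- q^-1) * \sum_(j < l) ys j i = 0 \/
       exists k : nat, `|r%:R `^ (- q^-1) * \sum_(j < l) ys j i| `^ q = (r%:R^-1) ^+ k).
    move=> i; case: (single_nz (fun j k jk => disj j k jk i)) => [H0|[j0 H0]].
      rewrite !big1 ?mulr0 ?normpow0 //; last by move=> j _; rewrite H0 normpow0.
      by split=> //; left.
    rewrite (bigD1 j0) //= big1 ?addr0; last by move=> j /H0.
    rewrite (bigD1 j0) //= big1 ?addr0; last by move=> j /H0 ->; rewrite normpow0.
    rewrite normrM ger0_norm // powRM // upow; split => //.
    case: ((IH j0).1 i) => [->|[k ->]]; first by left; rewrite mulr0.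
    by right; exists k.+1; rewrite exprS.
  split; first by move=> i; case: (key i) => _ [->|]; [left|right].
  move=> n; under eq_bigr do rewrite (key _).1.
  rewrite -mulr_sumr exchange_big /=.
  apply: (@le_trans _ _ (r%:R^-1 * \sum_(j < l) (1 : R))).
    rewrite ler_wpM2l ?invr_ge0 ?(ltW rR0) // ler_sum // => j _; exact: (IH j).2.
  rewrite sumr_const card_ord -[X in _ <= X](mulVf (lt0r_neq0 rR0)) ler_wpM2l ?invr_ge0 ?(ltW rR0) //.
  by rewrite ler_nat; case/andP: lr.
Qed.
Lemma fsT (R : realType) (F : nat -> R) n :
  (forall i, (n <= i)%N -> F i = 0) ->
  \sum_(i \in [set: nat]) F i = \sum_(i < n) F i.
Proof.
move=> Fn; rewrite fsbig_ord; apply: esym; apply: fsbig_widen => // i [_ /=].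
by move/negP; rewrite -leqNgt => /Fn.
Qed.

Lemma xpow (R : realType) (p : R) (r : nat) (a : R) :
  0 < p -> (0 < r)%N -> C_alpha (r%:R `^ p^-1) a ->
  a = 0 \/ exists j : int, 0 < `|a| /\ `|a| `^ p = r%:R ^ j.
Proof.
move=> p0 r0 [->|[j Hj]]; first by left.
have s0 : 0 < (r%:R `^ p^-1 : R) by rewrite powR_gt0 // ltr0n.
have E : `|a| = (r%:R `^ p^-1) ^ j.
  by case: Hj => ->; rewrite ?normrN ger0_norm // exprz_ge0 // ltW.
right; exists j; rewrite E exprz_gt0 //; split => //.
rewrite -powR_intmul ?(ltW s0) // -!powRrM mulrC -mulrA mulfV ?gt_eqF // mulr1.
by rewrite powR_intmul // ler0n.
Qed.

Theorem mainTheorem4 (R : realType) (p q : R) (r : nat) :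
  1 < p -> 1 < q -> p^-1 + q^-1 = 1 -> (1 < r)%N ->
  forall x : nat -> R, N_alpha (r%:R `^ p^-1) x ->
  norm_pr q r x <= 1 + lp_pow p x / (r%:R `^ q^-1).
Proof.
move=> p1 q1 pq r1 x [[n xn] xC].
have p0 : 0 < p by apply: lt_trans p1.
have q0 : 0 < q by apply: lt_trans q1.
have r0 : (0 < r)%N by apply: ltn_trans r1.
have rR0 : 0 < r%:R :> R by rewrite ltr0n.
have rR1 : 1 < r%:R :> R by rewrite ltr1n.
set t := r%:R `^ q^-1.
have t0 : 0 < t by rewrite powR_gt0.
apply: ge_sup.
  exists (\sum_(i \in [set: nat]) x i * sgn_unit R false 0 i).
  by exists (sgn_unit R false 0) => //; exact: KM_unit.
move=> _ [y Hy <-]; have [Hy1 Hy2] := KM_inv q0 r0 Hy.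
rewrite (@fsT _ _ n); last by move=> i /xn ->; rewrite mul0r.
rewrite /lp_pow (@fsT _ _ n); last by move=> i /xn ->; rewrite normpow0 // gt_eqF.
rewrite mulr_suml.
apply: (@le_trans _ _ (\sum_(i < n) (`|x i| `^ p / t + `|y i| `^ q))); last first.
  by rewrite big_split /= addrC lerD2r (Hy2 n).
apply: ler_sum => i _.
apply: le_trans (ler_norm _) _; rewrite normrM.
case: (xpow p0 r0 (xC i)) => [->|[j [xpos xj]]]; first by rewrite normr0 mul0r addr_ge0 ?divr_ge0 ?powR_ge0 ?(ltW t0).
case: (eqVneq (y i) 0) => [->|yn0]; first by rewrite normr0 mulr0 addr_ge0 ?divr_ge0 ?powR_ge0 ?(ltW t0).
case: (Hy1 i) => [y0|[k yk]]; first by rewrite y0 eqxx in yn0.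
have ypos : 0 < `|y i| by rewrite normr_gt0.
have Ex : `|x i| = (`|x i| `^ p) `^ p^-1 by rewrite -powRrM mulfV ?gt_eqF // powRr1 ?ltW.
have Ey : `|y i| = (`|y i| `^ q) `^ q^-1 by rewrite -powRrM mulfV ?gt_eqF // powRr1 ?ltW.
rewrite {1}Ex {1}Ey xj yk.
have rk0 : 0 < (r%:R : R) ^+ k by rewrite exprn_gt0.
have Bk : (r%:R^-1 : R) ^+ k = 1 / r%:R ^+ k by rewrite exprVn div1r.
apply: key_ineq => //; first by rewrite exprz_gt0.
  by rewrite exprn_gt0 // invr_gt0.
have ur : (r%:R : R) \is a GRing.unit by rewrite unitfE gt_eqF.
case: (powz_dich (j + k%:Z) rR1); rewrite exprzDr //.
  by move=> H; left; rewrite Bk ler_pdivlMr.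
by move=> H; right; rewrite Bk mulrA mulr1 ler_pdivrMr.
Qed.
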